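(* For every integer $\nu\ge0$ and every positive integer $n$, $g_\nu(n,0)\neq0$.
   Context: Falling factorial: $(x)_m=x(x-1)\cdots(x-m+1)$ for $m\ge1$, $(x)_0=1$, $(x)_m=1/(x)_{-m}$ for $m\le-1$. $$g_\nu(n,k):=\frac{(2\nu-1)\,(2\nu-2)_{\nu-1}^2}{2^{2\nu-2}}\sum_{r=0}^{\nu}(-1)^{\nu+r}\frac{2\nu-2r-1}{(2r)!\,(2\nu-2r)!}(6k+1)^{2r}\big(24n-(6k+1)^2\big)^{\nu-r}.$$ *)

(* Defs.v *)
From mathcomp Require Import all_boot all_order all_algebra.
Set Implicit Arguments. Unset Strict Implicit. Unset Printing Implicit Defensive.
Import Order.TTheory GRing.Theory Num.Theory.
Local Open Scope ring_scope.

Definition ffact_nat (x : rat) (m : nat) : rat :=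
  \prod_(i < m) (x - i%:R).

Definition ffact (x : rat) (m : int) : rat :=
  match m with
  | Posz k => ffact_nat x k
  | Negz k => (ffact_nat x k.+1)^-1
  end.

Definition g (nu : nat) (n k : int) : rat :=
  let v : rat := nu%:R in
  let a : rat := (6 * k + 1)%:~R in
  let N : rat := n%:~R in
  ((2 * v - 1) * (ffact (2 * v - 2) (nu%:Z - 1)) ^+ 2 / (2 : rat) ^ (2 * nu%:Z - 2))
  * \sum_(r < nu.+1)
      (-1) ^+ (nu + r)%N * (2 * v - 2 * r%:R - 1)
      / (((2 * r)`!)%N%:R * ((2 * nu - 2 * r)`!)%N%:R)
      * a ^+ (2 * r)%N * (24 * N - a ^+ 2) ^+ (nu - r)%N.

(* Main.v *)
Require Import Defs.
From mathcomp Require Import all_boot all_order all_algebra.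
From mathcomp Require Import zify ring lra.
Import Order.TTheory GRing.Theory Num.Theory.
Local Open Scope ring_scope.

Lemma castz (nu i : nat) (M : int) :
  (((-1) ^+ (nu + i) * ((2*nu)%:Z - 2*i%:Z - 1) * ('C(2*nu,2*i))%:Z * M^+(nu-i-1))%:~R : rat)
  = (-1) ^+ (nu + i) * (2 * nu%:R - 2 * i%:R - 1) * ('C(2*nu,2*i))%:R * (M%:~R : rat)^+(nu-i-1).
Proof.
rewrite !rmorphM !rmorphXn /= !rmorphB /= !rmorphM /= rmorphN rmorph1 -natrM.
rewrite -[2%:~R]/(2%:R) -[i%:~R]/(i%:R) -[((2*nu)%N)%:~R]/(((2*nu)%N)%:R) -[_%:~R]/(_%:R) natrM. done.

Qed.

Theorem mainTheorem5 (nu : nat) (n : int) : 0 < n -> g nu n 0 != 0.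
Proof.
move=> hn; rewrite /g mulr0 add0r mulf_eq0 negb_or; apply/andP; split.
  rewrite mulf_neq0 ?invr_neq0 ?expfz_neq0 // mulf_neq0 ?expf_neq0 //.
    rewrite subr_eq0 -[1]/(1%:R : rat) -[2]/(2%:R : rat) -natrM eqr_nat.
    by apply/negP => /eqP; lia.
  case: nu => [|k].
    rewrite /ffact /ffact_nat (_ : 0%Z - 1 = Negz 0) // big_ord1 invr_neq0 //.
  have -> : (k.+1%:Z - 1) = k%:Z by rewrite -addn1 PoszD addrK.
  rewrite /ffact /ffact_nat; apply/prodf_neq0 => i _.
  have hi : (i%:R : rat) < k%:R by rewrite ltr_nat ltn_ord.
  rewrite [k.+1%:R]mulrSr; move: hi; set x := (i%:R : rat); set y := (k%:R : rat) => hi.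
  have hx : 0 <= x by rewrite /x ler0n.
  apply/negP => /eqP; lra.
set m : rat := 24 * n%:~R - 1%:~R ^+ 2.
pose M : int := 24 * n - 1.
have hm : m = M%:~R by rewrite /m /M expr1n rmorphB rmorphM /=.
pose F : rat := ((2*nu)`!)%:R.
have hF0 : F != 0 by rewrite /F pnatr_eq0 -lt0n fact_gt0.
pose z (i : nat) : int := (-1) ^+ (nu + i) * ((2*nu)%:Z - 2*i%:Z - 1) * ('C(2*nu,2*i))%:Z * M^+(nu-i-1).
rewrite big_ord_recr /=.
have h1 : (\sum_(i < nu)
     (-1) ^+ (nu + i) * (2 * nu%:R - 2 * i%:R - 1) /
     ((2 * i)`!%:R * (2 * nu - 2 * i)`!%:R) * 1%:~R ^+ (2 * i) *
     m ^+ (nu - i)) * F = M%:~R * (\sum_(i < nu) z i)%:~R.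
  rewrite mulr_suml rmorph_sum mulr_sumr; apply: eq_bigr => i _.
  transitivity ((M%:~R : rat) * ((-1) ^+ (nu + i) * (2 * nu%:R - 2 * i%:R - 1) * ('C(2*nu,2*i))%:R * (M%:~R : rat)^+(nu-i-1))); last by rewrite -castz.
  have e : (nu - i = (nu - i - 1).+1)%N by have := ltn_ord i; lia.
  rewrite expr1n mulr1 [in m ^+ _]e hm exprS.
  have hb : (2 * i <= 2 * nu)%N by have := ltn_ord i; lia.
  rewrite /F -(bin_fact hb) !natrM.
  have h2 : ((2 * i)`!%:R : rat) != 0 by rewrite pnatr_eq0 -lt0n fact_gt0.
  have h3 : ((2 * nu - 2 * i)`!%:R : rat) != 0 by rewrite pnatr_eq0 -lt0n fact_gt0.
  move: h2 h3; set a := ((2 * i)`!%:R : rat); set b := ((2 * nu - 2 * i)`!%:R : rat) => h2 h3.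
  set s := ((-1) ^+ (nu + i) : rat); set p := ((M%:~R : rat) ^+ (nu - i - 1)).
  field; apply/andP; split => //.
have hL : (-1) ^+ (nu + nu) * (2 * nu%:R - 2 * nu%:R - 1) /
  (((2 * nu)`!)%:R * ((2 * nu - 2 * nu)`!)%:R) * 1%:~R ^+ (2 * nu) *
  m ^+ (nu - nu) * F = -1 :> rat.
  rewrite !subnn expr0 mulr1 expr1n mulr1 fact0 mulr1 addnn -mul2n exprM sqrrN ?expr1n subrr sub0r.

  rewrite -/F; field; done.
apply/negP => /eqP H0.
have : (M * (\sum_(i < nu) z i))%:~R = (1 : int)%:~R :> rat.
  have := congr1 (fun x => x * F) H0; rewrite /= mulrDl h1 hL mul0r => /eqP.
  by rewrite addr_eq0 opprK intrM => /eqP.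
move/intr_inj => hMK.
have h23 : 23 <= M by rewrite /M; lia.
have [hK|hK] := lerP (\sum_(i < nu) z i) 0; nia.
Qed.
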